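(* Let $p$ be a prime number, $n$ a positive integer and $Q\in\mathbb{Z}[X_1,\dots,X_n]$ a quadratic form. Then the set $R(\mathbb{N}\cap Q(\mathbb{Z}^n))$ is dense in $\mathbb{Q}_p$ if and only if $R(Q(\mathbb{Z}^n))$ is dense in $\mathbb{Q}_p$ and $\mathbb{N}_+\cap Q(\mathbb{Z}^n)\neq\varnothing$. Likewise, $R(\mathbb{N}\cap Q(\mathbb{N}^n))$ is dense in $\mathbb{Q}_p$ if and only if $R(Q(\mathbb{N}^n))$ is dense in $\mathbb{Q}_p$ and $\mathbb{N}_+\cap Q(\mathbb{N}^n)\neq\varnothing$.
   Context: $\mathbb{N}$ denotes the nonnegative integers and $\mathbb{N}_+$ the positive integers. A quadratic form is a homogeneous polynomial of degree two, not all coefficients zero. For a subset $A$ of a field, $R(A)=\{a/b: a,b\in A,\ b\neq 0\}$. For $S\subseteq\mathbb{Z}^n$, $Q(S)=\{Q(\mathbf{x}):\mathbf{x}\in S\}$. Density is with respect to the $p$-adic topology on $\mathbb{Q}_p$. *)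

(* Defs.v *)
From HB Require Import structures.
From mathcomp Require Import all_boot all_order all_algebra.
From mathcomp Require Import mpoly.
Set Implicit Arguments. Unset Strict Implicit. Unset Printing Implicit Defensive.
Import Order.TTheory GRing.Theory Num.Theory.
Local Open Scope ring_scope.

Definition quadratic_form (n : nat) (Q : {mpoly int[n]}) : Prop :=
  Q != 0 /\ Q \is @ishomog1 n int 2 mdeg.

Definition vp (p : nat) (x : rat) : int :=
  (logn p `|numq x|%N)%:Z - (logn p `|denq x|%N)%:Z.

(* Q is dense in Q_p and the p-adic
   balls around rationals, {y : |y - x|_p <= p^-k}, form a base of the
   topology, so A (a subset of Q) is dense in Q_p iff every such ball
   around every rational x meets A. *)
Definition dense_in_Qp (p : nat) (A : rat -> Prop) : Prop :=
  forall (x : rat) (k : nat), exists a, A a /\ (a = x \/ (k%:Z <= vp p (a - x))).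

Definition ratio_set (A : int -> Prop) : rat -> Prop :=
  fun q => exists a b : int, A a /\ A b /\ b != 0 /\ q = a%:~R / b%:~R.

Definition values_Z (n : nat) (Q : {mpoly int[n]}) : int -> Prop :=
  fun z => exists x : 'I_n -> int, z = Q.@[x].
Definition values_N (n : nat) (Q : {mpoly int[n]}) : int -> Prop :=
  fun z => exists x : 'I_n -> nat, z = Q.@[fun i => (x i)%:Z].

Definition nonneg_part (S : int -> Prop) : int -> Prop := fun z => S z /\ 0 <= z.

(* Main.v *)
Require Import Defs.
From HB Require Import structures.
From mathcomp Require Import all_boot all_order all_algebra.
From mathcomp Require Import mpoly zify ring lra.
Import Order.TTheory GRing.Theory Num.Theory.
Local Open Scope ring_scope.

Lemma vp_frac p (a b : int) : a != 0 -> b != 0 ->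
  vp p (a%:~R / b%:~R) = (logn p `|a|%N)%:Z - (logn p `|b|%N)%:Z.
Proof.
move=> a0 b0; rewrite /vp; set q : rat := _ / _.
have e : numq q * b = a * denq q.
  apply: (@intr_inj rat); rewrite !rmorphM /= numqE /q.
  have : (b%:~R : rat) != 0 by rewrite intr_eq0.
  move=> hb; field; exact: hb.
have d0 : denq q != 0 by rewrite denq_eq0.
have n0 : numq q != 0.
  apply/eqP=> h; move: e; rewrite h mul0r => /esym/eqP; rewrite mulf_eq0.
  by rewrite (negbTE a0) (negbTE d0).
have e2 : (`|numq q| * `|b|)%N = (`|a| * `|denq q|)%N by rewrite -!abszM e.
have := congr1 (logn p) e2.
rewrite !lognM ?absz_gt0 //.
move=> h; lia.
Qed.

Lemma diff_eq (a b : int) (x : rat) : b != 0 ->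
  a%:~R / b%:~R - x = (a * denq x - numq x * b)%:~R / (b * denq x)%:~R :> rat.
Proof.
move=> b0; rewrite -{1}[x]divq_num_den.
have hb : (b%:~R : rat) != 0 by rewrite intr_eq0.
have hs : ((denq x)%:~R : rat) != 0 by rewrite intr_eq0 denq_eq0.
rewrite !rmorphB !rmorphM /=. field. by rewrite hb hs.
Qed.

Lemma close_iff p k (x : rat) (a b : int) : prime p -> b != 0 ->
  (a%:~R / b%:~R = x \/ k%:Z <= vp p (a%:~R / b%:~R - x)) <->
  (((p ^ (k + logn p `|b| + logn p `|denq x|))%N)%:Z %| a * denq x - numq x * b)%Z.
Proof.
move=> pp b0; rewrite diff_eq //.
set D := a * denq x - numq x * b.
have s0 : denq x != 0 by rewrite denq_eq0.
have bs0 : b * denq x != 0 by rewrite mulf_eq0 negb_or b0 s0.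
have eqx : (a%:~R / b%:~R = x :> rat) <-> D = 0.
  rewrite -[x in _ = x]divq_num_den.
  have hb : (b%:~R : rat) != 0 by rewrite intr_eq0.
  have hs : ((denq x)%:~R : rat) != 0 by rewrite intr_eq0.
  rewrite (rwP eqP) eqr_div // -!rmorphM /= (inj_eq (@intr_inj rat)).
  rewrite -subr_eq0 -/D; split; [by move/eqP | by move=> ->].
have [D0|D0] := eqVneq D 0.
  rewrite D0 dvdz0; split=> // _; left; by apply/eqP; rewrite -(rwP eqP); apply eqx.
rewrite vp_frac // dvdzE /= pfactor_dvdn // ?absz_gt0 // abszM lognM ?absz_gt0 //.
split.
  case=> [/eqx h|h]; first by rewrite h eqxx in D0.
  lia.
move=> h; right; lia.
Qed.

Lemma dvdz_logn p j (x : int) : prime p -> x != 0 ->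
  (((p ^ j)%N)%:Z %| x)%Z = (j <= logn p `|x|)%N.
Proof. by move=> pp x0; rewrite dvdzE /= pfactor_dvdn // absz_gt0. Qed.

Lemma dvdz_pow {p i j : nat} {x : int} : (i <= j)%N ->
  (((p ^ j)%N)%:Z %| x)%Z -> (((p ^ i)%N)%:Z %| x)%Z.
Proof.
move=> ij; apply: dvdz_trans; rewrite dvdzE /=; exact: dvdn_exp2l.
Qed.

Lemma logn_pert p (b b' : int) : prime p -> b != 0 -> b' != 0 ->
  (((p ^ (logn p `|b|).+1)%N)%:Z %| b' - b)%Z -> logn p `|b'| = logn p `|b|.
Proof.
move=> pp b0 b'0 h; set f := logn p `|b|.
have h1 : (((p ^ f)%N)%:Z %| b')%Z.
  have -> : b' = (b' - b) + b by rewrite subrK.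
  apply: rpredD; first exact: (dvdz_pow (leqnSn f) h).
  by rewrite dvdz_logn.
have h2 : ~~ (((p ^ f.+1)%N)%:Z %| b')%Z.
  apply/negP=> h3.
  have : (((p ^ f.+1)%N)%:Z %| b' - (b' - b))%Z by apply: rpredB.
  by rewrite opprB addrC subrK dvdz_logn // ltnn.
move: h1 h2; rewrite !dvdz_logn // -ltnNge ltnS => h1 h2.
by apply/eqP; rewrite eqn_leq h1 h2.
Qed.

Lemma generic p (V : int -> Prop) : prime p ->
  (forall a N, V a -> exists a', V a' /\ 0 < a' /\ (((p ^ N)%N)%:Z %| a' - a)%Z) ->
  dense_in_Qp p (ratio_set V) -> dense_in_Qp p (ratio_set (nonneg_part V)).
Proof.
move=> pp pert dens x k.
have [q [[a [b [Va [Vb [b0 qE]]]]] hq]] := dens x k.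
rewrite qE in hq; move/(close_iff p k x a b pp b0): hq => hD.
set e := (k + logn p `|b| + logn p `|denq x|)%N in hD.
have [a' [Va' [a'0 ha]]] := pert a e.+1 Va.
have [b' [Vb' [b'0 hb]]] := pert b e.+1 Vb.
have b'n0 : b' != 0 by rewrite gt_eqF.
exists (a'%:~R / b'%:~R); split.
  exists a', b'; do !split => //; exact: ltW.
apply/(close_iff p k x a' b' pp b'n0).
have -> : logn p `|b'| = logn p `|b|.
  apply: logn_pert => //; apply: (dvdz_pow _ hb).
  rewrite ltnS /e; lia.
rewrite -/e.
have -> : a' * denq x - numq x * b' =
  (a * denq x - numq x * b) + ((a' - a) * denq x - numq x * (b' - b)) by ring.
apply: rpredD => //.
have ha2 := dvdz_pow (leqnSn e) ha; have hb2 := dvdz_pow (leqnSn e) hb.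
apply: rpredB; [exact: dvdz_mulr | exact: dvdz_mull].
Qed.

Lemma generic_conv p (V : int -> Prop) :
  dense_in_Qp p (ratio_set (nonneg_part V)) ->
  dense_in_Qp p (ratio_set V) /\ exists z, V z /\ 0 < z.
Proof.
move=> d; split.
  move=> x k; have [q [[a [b [[Va _] [[Vb _] [b0 qE]]]]] hq]] := d x k.
  by exists q; split=> //; exists a, b.
have [q [[a [b [_ [[Vb b_ge] [b0 _]]]]] _]] := d 0 0%N.
by exists b; split=> //; rewrite lt_def b0.
Qed.
Definition tc (q : {poly int}) (k : nat) (c : int) := (size q <= k.+1)%N /\ q`_k = c.

Lemma tcM q1 k1 c1 q2 k2 c2 : tc q1 k1 c1 -> tc q2 k2 c2 -> tc (q1 * q2) (k1 + k2) (c1 * c2).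
Proof.
move=> [s1 e1] [s2 e2]; split.
  apply: leq_trans (size_polyMleq _ _) _; lia.
rewrite coefM (bigD1 (Ordinal (leq_addr k2 k1.+1 : (k1 < (k1 + k2).+1)%N))) //=.
rewrite addKn e1 e2 big1 ?addr0 // => j /negbTE hj.
have [lt|ge] := ltnP j k1.
  rewrite [q2`__]nth_default ?mulr0 //; apply: leq_trans s2 _; lia.
rewrite [q1`__]nth_default ?mul0r //; apply: leq_trans s1 _.
have : (nat_of_ord j != k1) by apply/eqP => h; move: hj; rewrite -(inj_eq val_inj) /= h eqxx.
lia.
Qed.

Lemma tc1 : tc 1 0 1.
Proof. by split; rewrite ?size_poly1 // coef1. Qed.

Lemma tcX {q k c} m : tc q k c -> tc (q ^+ m) (k * m) (c ^+ m).
Proof.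
move=> h; elim: m => [|m ih]; first by rewrite muln0 expr0 expr0; exact: tc1.
by rewrite exprS exprS mulnS; apply: tcM.
Qed.

Lemma tc_lin (u w : int) : tc (w%:P * 'X + u%:P) 1 w.
Proof.
split; last by rewrite coefD coefMX coefC /= coefC addr0.
rewrite size_MXaddC; case: ifP => // _; rewrite size_polyC; by case: (w != 0).
Qed.

Lemma tc_add p c q d k : tc p k c -> tc q k d -> tc (p + q) k (c + d).
Proof.
move=> [s1 e1] [s2 e2]; split; last by rewrite coefD e1 e2.
apply: leq_trans (size_polyD _ _) _; by rewrite geq_max s1 s2.
Qed.

Lemma tc_C c : tc c%:P 0 c.
Proof. split; by rewrite ?coefC // size_polyC; case: (c != 0). Qed.

Lemma expand n (Q : {mpoly int[n]}) : Q \is @ishomog1 n int 2 mdeg ->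
  forall u w : 'I_n -> int, exists B : int, forall t : int,
  Q.@[fun i => u i + t * w i] = Q.@[u] + B * t + Q.@[w] * t ^+ 2.
Proof.
move=> /dhomogP hom u w.
pose h i := (w i)%:P * 'X + (u i)%:P.
pose R := \sum_(m <- msupp Q) (Q@_m)%:P * \prod_i h i ^+ m i.
have tcR : tc R 2 (Q.@[w]).
  rewrite mevalE /R !big_seq.
  apply: (big_ind2 (fun q c => tc q 2 c)).
  - split; by rewrite ?size_poly0 ?coef0.
  - by move=> ? ? ? ? ; apply: tc_add.
  move=> m mQ; have -> : 2%N = (0 + mdeg m)%N by rewrite (hom m mQ).
  apply: tcM; first exact: tc_C.
  rewrite mdegE.
  apply: (big_ind3 (fun q k c => tc q k c)); first exact: tc1.
    by move=> ? ? ? ? ? ?; apply: tcM.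
  move=> i _; have := tcX (m i) (tc_lin (u i) (w i)); by rewrite mul1n.
have ev : forall t, R.[t] = Q.@[fun i => u i + t * w i].
  move=> t; rewrite mevalE /R horner_sum; apply: eq_bigr => m _.
  rewrite hornerM hornerC horner_prod; congr (_ * _); apply: eq_bigr => i _.
  by rewrite horner_exp /h !hornerE mulrC addrC.
have hc : forall t, R.[t] = R`_0 + R`_1 * t + R`_2 * t ^+ 2.
  move=> t; rewrite (horner_coef_wide _ (proj1 tcR)) !big_ord_recr big_ord0 /=.
  by rewrite add0r expr0 mulr1 expr1.
exists R`_1 => t; rewrite -ev hc (proj2 tcR).
have := hc 0; rewrite ev mulr0 expr0n /= mulr0 !addr0 => <-.
congr (_ + _ + _); apply: meval_eq => i; by rewrite mul0r addr0.
Qed.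

Lemma pos_pert (a B c t : int) : 0 < c -> `|B| + `|a| + 1 <= t -> 0 < a + B * t + c * t ^+ 2.
Proof.
move=> c0 ht.
have c1 : 1 <= c by [].
have ha : - `|a| <= a by rewrite lerNl -normrN ler_norm.
have hB : - `|B| <= B by rewrite lerNl -normrN ler_norm.
have na : 0 <= `|a| by []. have nB : 0 <= `|B| by [].
rewrite expr2; nra.
Qed.

Lemma pow_ge1 {p} N : (0 < p)%N -> 1 <= ((p ^ N)%N)%:Z.
Proof. by move=> p0; rewrite lez_nat expn_gt0 p0. Qed.

Lemma pert_Z p n (Q : {mpoly int[n]}) : (0 < p)%N -> quadratic_form Q ->
  (exists z, values_Z Q z /\ 0 < z) ->
  forall a N, values_Z Q a -> exists a', values_Z Q a' /\ 0 < a' /\ (((p ^ N)%N)%:Z %| a' - a)%Z.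
Proof.
move=> p0 [_ hom] [c [[w ->] c0]] a N [u ->].
have [B hB] := expand n Q hom u w.
pose M : int := `|B| + `|Q.@[u]| + 1.
pose t : int := (p ^ N)%N%:Z * M.
exists Q.@[fun i => u i + t * w i]; split; first by exists (fun i => u i + t * w i).
rewrite hB; split.
  apply: pos_pert => //; rewrite /t -/M.
  have h1 := pow_ge1 N p0.
  have h2 : 0 <= M by rewrite /M; apply: addr_ge0 => //; apply: addr_ge0.
  by rewrite -{1}[M]mul1r; apply: ler_wpM2r.
have -> : Q.@[u] + B * t + Q.@[w] * t ^+ 2 - Q.@[u] = t * (B + Q.@[w] * t) by ring.
by apply: dvdz_mulr; rewrite /t; apply: dvdz_mulr.
Qed.

Lemma pert_N p n (Q : {mpoly int[n]}) : (0 < p)%N -> quadratic_form Q ->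
  (exists z, values_N Q z /\ 0 < z) ->
  forall a N, values_N Q a -> exists a', values_N Q a' /\ 0 < a' /\ (((p ^ N)%N)%:Z %| a' - a)%Z.
Proof.
move=> p0 [_ hom] [c [[y ->] c0]] a N [x ->].
have [B hB] := expand n Q hom (fun i => (x i)%:Z) (fun i => (y i)%:Z).
pose M : nat := (`|B| + `|Q.@[fun i => (x i)%:Z]| + 1)%N.
pose tn : nat := (p ^ N * M)%N.
exists Q.@[fun i => (x i)%:Z + tn%:Z * (y i)%:Z]; split.
  exists (fun i => (x i + tn * y i)%N); apply: meval_eq => i; by rewrite PoszD PoszM.
rewrite hB; split.
  apply: pos_pert => //; rewrite /tn PoszM /M !PoszD !abszE.
  have h1 := pow_ge1 N p0.
  set K := (_ + _ + _)%R.
  have h2 : 0 <= K by rewrite /K; apply: addr_ge0 => //; apply: addr_ge0.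
  by rewrite -{1}[K]mul1r; apply: ler_wpM2r.
set U := Q.@[_]; set t := tn%:Z.
have -> : U + B * t + Q.@[fun i => (y i)%:Z] * t ^+ 2 - U = t * (B + Q.@[fun i => (y i)%:Z] * t) by ring.
by apply: dvdz_mulr; rewrite /t /tn PoszM; apply: dvdz_mulr.
Qed.

Theorem theorem2 (p : nat) (n : nat) (Q : {mpoly int[n]}) :
  prime p -> (0 < n)%N -> quadratic_form Q ->
  (dense_in_Qp p (ratio_set (nonneg_part (values_Z Q))) <->
     dense_in_Qp p (ratio_set (values_Z Q)) /\
     (exists z, values_Z Q z /\ 0 < z))
  /\
  (dense_in_Qp p (ratio_set (nonneg_part (values_N Q))) <->
     dense_in_Qp p (ratio_set (values_N Q)) /\
     (exists z, values_N Q z /\ 0 < z)).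
Proof.
move=> pp _ qf; have p0 := prime_gt0 pp; split; split.
- exact: generic_conv.
- by move=> [d ex]; apply: (generic _ _ pp _ d); exact: (pert_Z _ _ _ p0 qf ex).
- exact: generic_conv.
- by move=> [d ex]; apply: (generic _ _ pp _ d); exact: (pert_N _ _ _ p0 qf ex).
Qed.
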